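(* Let $B$ be a board with set of sinks $S$. If the extended full tilt graph $\hat G_F(B)$ (with sinks $S$) contains an arborescence of weight $w$ converging to its root, then the extended large tilt graph $\hat G_L(B,S)$ contains an arborescence of weight at most $w$ converging to its root.
   Context: Pixels are unit squares indexed by $\mathbb{Z}^2$. A board $B=(V,E)$ is a finite subgraph of the square grid graph on $\mathbb{Z}^2$; its boundary consists of pixel sides not shared with a neighbouring pixel joined by an edge of $E$. $S\subseteq V$ are sinks. For a pixel $p$, its row (column) segment is the maximal set of pixels reachable from $p$ using only horizontal (vertical) edges of $E$; $p^\ell,p^r$ are the leftmost/rightmost pixels of its row segment and $p^u,p^d$ the topmost/bottommost pixels of its column segment. The full tilt graph $G_F(B)$ has vertex set $V$ and edges $(p,p^x)$ for $x\in\{\ell,r,u,d\}$, $p^x\ne p$. A corner pixel is a pixel $p$ with $p=p^x=p^y$ for some $x\in\{\ell,r\}$, $y\in\{u,d\}$. The large tilt graph $G_L(B,S)$ is the subgraph of $G_F(B)$ induced by the vertex set consisting of (i) all pixels reachable in $G_F(B)$ from corner pixels, (ii) every sink $s$ and $s^\ell,s^r,s^u,s^d$, (iii) for every reflex corner of the boundary, the endpoints of the row and column segments of the pixels incident to that corner, (iv) all pixels on the intersection of a row segment and a column segment each containing a pixel included in (i)–(iii). Extended graph: for a directed graph $G$ with sinks $S$, $\hat G$ has vertex set $V(G)\cup\{r\}$ with new root $r$ and edges: every edge of $G$ with weight $0$; for every edge $(p,q)$ of $G$ with $(q,p)$ not an edge of $G$, the inverse edge $(q,p)$ with weight $1$;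 and $(s,r)$ with weight $0$ for $s\in S$. An arborescence converging to $r$ is a spanning subgraph in which every vertex other than $r$ has exactly one outgoing edge and a directed path to $r$; its weight is the sum of its edge weights. *)

(* Defs.v *)
From mathcomp Require Import all_boot all_algebra.
Set Implicit Arguments. Unset Strict Implicit. Unset Printing Implicit Defensive.
Import GRing.Theory Num.Theory.
Local Open Scope ring_scope.

(* A pixel (x,y) is the unit square [x,x+1] x [y,y+1]; "up" means y+1. *)
Definition pixel := (int * int)%type.

Definition east  (p : pixel) : pixel := (p.1 + 1, p.2).
Definition west  (p : pixel) : pixel := (p.1 - 1, p.2).
Definition north (p : pixel) : pixel := (p.1, p.2 + 1).
Definition south (p : pixel) : pixel := (p.1, p.2 - 1).

(* A board: finite vertex set V (a list), horizontal edges hE p = edge between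
   p and east p, vertical edges vE p = edge between p and north p.  Being a
   subgraph of the grid graph is the hypothesis [is_board]. *)
Record board := Board { bV : seq pixel; hE : pred pixel; vE : pred pixel }.

Definition is_board (B : board) : Prop :=
  (forall p, hE B p -> (p \in bV B) /\ (east p \in bV B)) /\
  (forall p, vE B p -> (p \in bV B) /\ (north p \in bV B)).

(* Walking along edges; the fuel size V suffices since the walked pixels are
   pairwise distinct vertices of V. *)
Fixpoint walk (step : pixel -> pixel) (ok : pixel -> bool) (n : nat) (p : pixel)
  : pixel :=
  match n with
  | O => p
  | S n' => if ok p then walk step ok n' (step p) else p
  end.

Definition ptL (B : board) p := walk west  (fun q => hE B (west q))  (size (bV B)) p.
Definition ptR (B : board) p := walk east  (hE B)                    (size (bV B)) p.
Definition ptU (B : board) p := walk north (vE B)                    (size (bV B)) p.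
Definition ptD (B : board) p := walk south (fun q => vE B (south q)) (size (bV B)) p.

Definition in_row_seg (B : board) (p q : pixel) : Prop :=
  q.2 = p.2 /\ (ptL B p).1 <= q.1 /\ q.1 <= (ptR B p).1.
Definition in_col_seg (B : board) (p q : pixel) : Prop :=
  q.1 = p.1 /\ (ptD B p).2 <= q.2 /\ q.2 <= (ptU B p).2.

Definition fedge (B : board) (p q : pixel) : Prop :=
  p \in bV B /\ q \in [:: ptL B p; ptR B p; ptU B p; ptD B p] /\ q <> p.

Definition corner_pixel (B : board) (p : pixel) : Prop :=
  p \in bV B /\ (p = ptL B p \/ p = ptR B p) /\ (p = ptU B p \/ p = ptD B p).

Definition freach (B : board) (a q : pixel) : Prop :=
  exists s : seq pixel,
    (forall i, (i < size s)%N -> fedge B (nth a (a :: s) i) (nth a s i)) /\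
    last a s = q.

(* Lattice point c = (a,b) is the common corner of the pixels
   NE=(a,b), NW=(a-1,b), SW=(a-1,b-1), SE=(a,b-1). *)
Definition qNE (c : int * int) : pixel := c.
Definition qNW (c : int * int) : pixel := (c.1 - 1, c.2).
Definition qSW (c : int * int) : pixel := (c.1 - 1, c.2 - 1).
Definition qSE (c : int * int) : pixel := (c.1, c.2 - 1).

(* the four pixel sides emanating from c: joined = an edge of E crosses it *)
Definition j1 (B : board) c := hE B (qNW c).  (* NW - NE *)
Definition j2 (B : board) c := vE B (qSW c).  (* SW - NW *)
Definition j3 (B : board) c := hE B (qSW c).  (* SW - SE *)
Definition j4 (B : board) c := vE B (qSE c).  (* SE - NE *)

Definition bside (B : board) (X Y : pixel) (joined : bool) : Prop :=
  ((X \in bV B) \/ (Y \in bV B)) /\ ~~ joined.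

(* reflex corner: c is a boundary vertex (some boundary side ends at c) at
   which some interior sector has angle > 180 degrees, i.e. contains three
   cyclically consecutive pixels joined by edges. *)
Definition reflex_corner (B : board) (c : int * int) : Prop :=
  (bside B (qNW c) (qNE c) (j1 B c) \/ bside B (qSW c) (qNW c) (j2 B c) \/
   bside B (qSW c) (qSE c) (j3 B c) \/ bside B (qSE c) (qNE c) (j4 B c)) /\
  ((j1 B c && j2 B c) \/ (j2 B c && j3 B c) \/ (j3 B c && j4 B c) \/
   (j4 B c && j1 B c)).

Definition incident (B : board) (c : int * int) (p : pixel) : Prop :=
  p \in bV B /\ p \in [:: qNE c; qNW c; qSW c; qSE c].

Definition L0 (B : board) (S : seq pixel) (q : pixel) : Prop :=
  (exists c, corner_pixel B c /\ freach B c q) \/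
  (exists s, s \in S /\ q \in [:: s; ptL B s; ptR B s; ptU B s; ptD B s]) \/
  (exists c p, reflex_corner B c /\ incident B c p /\
               q \in [:: ptL B p; ptR B p; ptU B p; ptD B p]).

Definition Lvert (B : board) (S : seq pixel) (q : pixel) : Prop :=
  q \in bV B /\
  (L0 B S q \/
   exists a b, L0 B S a /\ L0 B S b /\ in_row_seg B a q /\ in_col_seg B b q).

(* A directed graph on pixels: vertex predicate vs and edge relation e
   (edges are only taken between vertices).  The root r is None. *)
Definition ext_edge (vs : pixel -> Prop) (e : pixel -> pixel -> Prop)
  (S : seq pixel) (u v : option pixel) (k : nat) : Prop :=
  match u, v with
  | Some p, Some q => vs p /\ vs q /\
        ((e p q /\ k = 0%N) \/ (~ e p q /\ e q p /\ k = 1%N))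
  | Some s, None => vs s /\ s \in S /\ k = 0%N
  | _, _ => False
  end.

Definition pstep (par : pixel -> option pixel) (o : option pixel) :=
  if o is Some p then par p else None.

(* par p = the head of the unique outgoing edge of p *)
Definition is_arborescence (vs : pixel -> Prop) (e : pixel -> pixel -> Prop)
  (S : seq pixel) (par : pixel -> option pixel) : Prop :=
  forall p, vs p ->
    (exists k, ext_edge vs e S (Some p) (par p) k) /\
    (exists n, iter n (pstep par) (Some p) = None).

Definition arb_weight (vs : pixel -> Prop) (e : pixel -> pixel -> Prop)
  (S : seq pixel) (par : pixel -> option pixel) (w : nat) : Prop :=
  exists (Ws : seq pixel) (wt : pixel -> nat),
    uniq Ws /\ (forall p, p \in Ws <-> vs p) /\
    (forall p, vs p -> ext_edge vs e S (Some p) (par p) (wt p)) /\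
    w = (\sum_(p <- Ws) wt p)%N.

Definition GF_vert (B : board) (p : pixel) : Prop := p \in bV B.

(* Main.v *)
Require Import Defs.
From mathcomp Require Import all_boot all_algebra zify.
From Stdlib Require Import ClassicalEpsilon.
Set Implicit Arguments. Unset Strict Implicit. Unset Printing Implicit Defensive.
Import GRing.Theory Num.Theory.

Definition pb (P : Prop) : bool :=
  if excluded_middle_informative P then true else false.
Lemma pbP (P : Prop) : reflect P (pb P).
Proof. rewrite /pb; case: excluded_middle_informative => h; constructor => //. Qed.

Lemma sum_sub_uniq (T : eqType) (s t : seq T) (f : T -> nat) :
  uniq s -> uniq t -> {subset s <= t} -> (\sum_(x <- s) f x <= \sum_(x <- t) f x)%N.
Proof.
move=> us ut sub.
rewrite [X in (_ <= X)%N](bigID (fun x => x \in s)) /=.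
rewrite -[X in (X + _)%N]big_filter.
rewrite [X in (_ <= X + _)%N](perm_big s); first exact: leq_addr.
apply: uniq_perm; [exact: filter_uniq | exact: us|].
by move=> x; rewrite mem_filter; case xs: (x \in s) => //=; rewrite (sub _ xs).
Qed.

Lemma iterS_pstep (par : pixel -> option pixel) n v :
  iter n.+1 (pstep par) (Some v) = iter n (pstep par) (par v).
Proof. by rewrite iterSr. Qed.

Lemma reduction (B : board) (S : seq pixel) (w : nat)
  (par : pixel -> option pixel) (pi : pixel -> pixel) :
  (forall v, v \in bV B -> Lvert B S (pi v)) ->
  (forall v, Lvert B S v -> pi v = v) ->
  (forall v u, fedge B v u -> pi v = pi u \/ fedge B (pi v) (pi u)) ->
  (forall p, Lvert B S p -> p \in bV B) ->
  (forall s, s \in S -> Lvert B S s) ->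
  is_arborescence (GF_vert B) (fedge B) S par ->
  arb_weight (GF_vert B) (fedge B) S par w ->
  exists (par' : pixel -> option pixel) (w' : nat),
    is_arborescence (Lvert B S) (fedge B) S par' /\
    arb_weight (Lvert B S) (fedge B) S par' w' /\ (w' <= w)%N.
Proof.
move=> piL piid pihom LV SL arb [Ws [wt [uWs [memWs [edWs ->]]]]].
pose P p n := has (fun v => (pi v == p) && (iter n (pstep par) (Some v) == None)) (bV B).
have exP p : Lvert B S p -> exists n, P p n.
  move=> Lp; have Vp := LV _ Lp; have [_ [n hn]] := arb p Vp.
  exists n; apply/hasP; exists p => //; rewrite piid // eqxx /=; exact/eqP.
pose Dm p := match excluded_middle_informative (exists n, P p n) with
             | left h => ex_minn h | right _ => 0%N end.
have DmP p : Lvert B S p -> P p (Dm p) /\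
    forall v n, v \in bV B -> pi v = p -> iter n (pstep par) (Some v) = None -> (Dm p <= n)%N.
  move=> Lp; rewrite /Dm; case: excluded_middle_informative => [h|h]; last first.
    by case: h; exact: exP.
  case: ex_minnP => m Pm mmin; split => // v n Vv pv hn; apply: mmin.
  by apply/hasP; exists v => //; rewrite pv eqxx /=; apply/eqP.
pose vs p := nth p (bV B) (find (fun v => (pi v == p) && (iter (Dm p) (pstep par) (Some v) == None)) (bV B)).
have vsP p : Lvert B S p -> [/\ vs p \in bV B, pi (vs p) = p &
     iter (Dm p) (pstep par) (Some (vs p)) = None].
  move=> Lp; have [hP _] := DmP p Lp.
  have := nth_find p hP; rewrite -/(vs p) => /andP [/eqP h1 /eqP h2].
  by split => //; apply: mem_nth; rewrite -has_find.
pose par' p := match par (vs p) with Some u => Some (pi u) | None => None end.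
pose wt' p := match par (vs p) with Some u => if pb (fedge B p (pi u)) then 0%N else 1%N | None => 0%N end.
have key p : Lvert B S p ->
   ext_edge (Lvert B S) (fedge B) S (Some p) (par' p) (wt' p) /\ (wt' p <= wt (vs p))%N /\
   (forall u, par (vs p) = Some u -> (Dm (pi u) < Dm p)%N).
  move=> Lp; have [Vv pvs itv] := vsP p Lp.
  have Ev := edWs _ Vv; rewrite /par' /wt'.
  case E: (par (vs p)) Ev => [u|] /= Ev.
    have Dpos : (0 < Dm p)%N by case: (Dm p) itv.
    have [m Dm_eq] : exists m, Dm p = m.+1 by exists (Dm p).-1; rewrite prednK.
    have itu : iter m (pstep par) (Some u) = None by rewrite -E -iterS_pstep -Dm_eq.
    have Vu : u \in bV B by case: Ev => _ [].
    have neq : pi u <> p.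
      move=> h; have [_ hmin] := DmP p Lp; have := hmin u m Vu h itu.
      by rewrite Dm_eq ltnn.
    have Lu := piL _ Vu.
    have Dlt : (Dm (pi u) < Dm p)%N.
      have [_ hmin] := DmP (pi u) Lu; rewrite Dm_eq ltnS; exact: (hmin u m Vu erefl itu).
    split; last split; last by move=> u'; case=> <-.
    - case: (pbP (fedge B p (pi u))) => hf.
        by split => //; split => //; left.
      split => //; split => //; right; split => //; split => //.
      case: Ev => _ [_ [[hf' _]|[_ [hf' _]]]].
        by case: (pihom _ _ hf') => h; rewrite pvs in h; [case: neq | case: hf].
      by case: (pihom _ _ hf') => h; rewrite pvs in h; [case: neq |].
    - case: (pbP (fedge B p (pi u))) => hf //.
      case: Ev => _ [_ [[hf' _]|[_ [_ ->]]]] //.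
      by case: (pihom _ _ hf'); rewrite pvs => h; [case: neq | case: hf].
  split => //; split => //.
  case: Ev => _ [sS _]; have Lv := SL _ sS.
  by rewrite -pvs (piid _ Lv).
have term k : forall p, Lvert B S p -> (Dm p <= k)%N -> exists n, iter n (pstep par') (Some p) = None.
  elim: k => [|k IH] p Lp Hk; have [_ [_ hD]] := key p Lp.
    case E: (par (vs p)) => [u|].
      by have := hD u E; rewrite ltnNge (leq_trans Hk (leq0n _)).
    by exists 1%N; rewrite /= /par' E.
  case E: (par (vs p)) => [u|]; last by exists 1%N; rewrite /= /par' E.
  have [Vv pvs _] := vsP p Lp.
  have Vu : u \in bV B by have := edWs _ Vv; rewrite E; case=> _ [].
  have [n hn] := IH (pi u) (piL _ Vu) (leq_trans (hD u E) Hk).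
  by exists n.+1; rewrite iterS_pstep /par' E.
exists par', (\sum_(p <- [seq p <- undup (bV B) | pb (Lvert B S p)]) wt' p)%N.
split; [|split].
- move=> p Lp; split; first by exists (wt' p); case: (key p Lp).
  exact: (term (Dm p) p Lp (leqnn _)).
- exists [seq p <- undup (bV B) | pb (Lvert B S p)], wt'; split; [|split; [|split]] => //.
  + by rewrite filter_uniq // undup_uniq.
  + move=> p; rewrite mem_filter mem_undup; split.
      by case/andP => /pbP.
    by move=> Lp; rewrite (LV _ Lp) andbT; apply/pbP.
  + by move=> p Lp; case: (key p Lp).
- set Ws' := [seq p <- _ | _].
  have memW p : p \in Ws' -> Lvert B S p by rewrite mem_filter => /andP [/pbP].
  apply: (@leq_trans (\sum_(p <- Ws') wt (vs p))%N).
    rewrite big_seq_cond [X in (_ <= X)%N]big_seq_cond; apply: leq_sum => p /andP [pW _].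
    by case: (key p (memW p pW)) => _ [].
  rewrite -(big_map vs predT wt); apply: sum_sub_uniq => //.
    rewrite map_inj_in_uniq; first by rewrite filter_uniq // undup_uniq.
    move=> p1 p2 h1 h2 e; have [_ e1 _] := vsP p1 (memW _ h1).
    by have [_ e2 _] := vsP p2 (memW _ h2); rewrite -e1 -e2 e.
  move=> v /mapP [p pW ->]; apply/memWs; have [Vv _ _] := vsP p (memW _ pW); exact: Vv.
Qed.

Local Open Scope ring_scope.

Lemma walk_iter (step : pixel -> pixel) (ok : pixel -> bool) m p :
  exists k, [/\ (k <= m)%N, walk step ok m p = iter k step p,
    (forall i, (i < k)%N -> ok (iter i step p)) & ((k < m)%N -> ~~ ok (iter k step p))].
Proof.
elim: m p => [|m IH] p; first by exists 0%N; split.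
rewrite /=; case h: (ok p); last by exists 0%N; split => //; rewrite h.
have [k [km -> hok hl]] := IH (step p).
exists k.+1; split => //; first by rewrite iterSr.
- by case=> [|i] // ; rewrite ltnS => hi; rewrite iterSr; apply: hok.
- by rewrite ltnS => hk; rewrite iterSr; apply: hl.
Qed.

Lemma walk_end (step : pixel -> pixel) (ok : pixel -> bool) (f g : pixel -> int) (V : seq pixel) :
  (forall q, f (step q) = f q + 1) -> (forall q, g (step q) = g q) ->
  (forall q1 q2, f q1 = f q2 -> g q1 = g q2 -> q1 = q2) ->
  (forall q, q \in V -> ok q -> step q \in V) ->
  forall p, p \in V ->
  [/\ g (walk step ok (size V) p) = g p, f p <= f (walk step ok (size V) p),
    (forall q, g q = g p -> f p <= f q -> f q < f (walk step ok (size V) p) -> ok q),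
    (forall q, g q = g p -> f p <= f q -> f q <= f (walk step ok (size V) p) -> q \in V) &
    ~~ ok (walk step ok (size V) p)].
Proof.
move=> hf hg inj hV p Vp.
have [k [km -> hok hl]] := walk_iter step ok (size V) p.
have fit i : f (iter i step p) = f p + i%:Z /\ g (iter i step p) = g p.
  elim: i => [|i [IH1 IH2]] /=; first by rewrite addr0.
  rewrite hf hg IH1 IH2; split => //; lia.
have inV i : (i <= k)%N -> iter i step p \in V.
  elim: i => [|i IH] // hi /=; apply: hV; first by apply: IH; exact: ltnW.
  exact: hok.
have kV : (k < size V)%N.
  rewrite ltn_neqAle km andbT; apply/negP => /eqP ek.
  have : (size (mkseq (fun i => iter i step p) k.+1) <= size V)%N.
    apply: uniq_leq_size.
      rewrite mkseq_uniq // => i j e.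
      have := f_equal f e; rewrite (fit i).1 (fit j).1 => e'.
      apply/eqP; rewrite -(eqn_pmul2l (isT : (0 < 1)%N)); apply/eqP. lia.
    by move=> x /mapP [i]; rewrite mem_iota add0n => /andP [_ hi] ->; apply: inV.
  by rewrite size_mkseq ek ltnn.
have gen q : g q = g p -> f p <= f q -> f q <= f p + k%:Z ->
    exists2 i, (i <= k)%N & q = iter i step p /\ (f q < f p + k%:Z -> (i < k)%N).
  move=> gq h1 h2; set i := absz (f q - f p).
  have hi : i%:Z = f q - f p by rewrite /i; lia.
  exists i; first by lia.
  split; last by lia.
  have [e1 e2] := fit i.
  apply: inj; [rewrite e1 hi; lia | by rewrite e2].
split.
- by rewrite (fit k).2.
- rewrite (fit k).1; lia.
- move=> q gq h1; rewrite (fit k).1 => h2.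
  have [i _ [eq hi]] := gen q gq h1 (ltac:(lia)); rewrite eq; apply: hok; apply: hi; exact: h2.
- move=> q gq h1; rewrite (fit k).1 => h2.
  by have [i ik [-> _]] := gen q gq h1 h2; apply: inV.
- exact: hl.
Qed.



Lemma pixE (a b : pixel) : a.1 = b.1 -> a.2 = b.2 -> a = b.
Proof. by case: a b => ? ? [? ?] /= -> ->. Qed.
Lemma pix_eta (a : pixel) : a = (a.1, a.2). Proof. by case: a. Qed.

Lemma westS (x y : int) : west (x + 1, y) = (x, y).
Proof. by rewrite /west /= addrK. Qed.
Lemma southS (x y : int) : south (x, y + 1) = (x, y).
Proof. by rewrite /south /= addrK. Qed.
Lemma eastW (x y : int) : east (x - 1, y) = (x, y).
Proof. by rewrite /east /= subrK. Qed.
Lemma northS (x y : int) : north (x, y - 1) = (x, y).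
Proof. by rewrite /north /= subrK. Qed.

Lemma inj1 (q1 q2 : pixel) : q1.1 = q2.1 -> q1.2 = q2.2 -> q1 = q2. Proof. exact: pixE. Qed.
Lemma inj2 (q1 q2 : pixel) : q1.2 = q2.2 -> q1.1 = q2.1 -> q1 = q2. Proof. by move=> *; apply: pixE. Qed.
Lemma inj3 (q1 q2 : pixel) : - q1.1 = - q2.1 -> q1.2 = q2.2 -> q1 = q2.
Proof. move=> h1 h2; apply: pixE => //; lia. Qed.
Lemma inj4 (q1 q2 : pixel) : - q1.2 = - q2.2 -> q1.1 = q2.1 -> q1 = q2.
Proof. move=> h1 h2; apply: pixE => //; lia. Qed.

Lemma ptR_spec (B : board) (p : pixel) : is_board B -> p \in bV B ->
  [/\ (ptR B p).2 = p.2, p.1 <= (ptR B p).1,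
   (forall x : int, p.1 <= x -> x < (ptR B p).1 -> hE B (x, p.2)),
   (forall x : int, p.1 <= x -> x <= (ptR B p).1 -> (x, p.2) \in bV B)
   & ~~ hE B (ptR B p)] /\ ptR B p \in bV B.
Proof.
move=> [hH hV] Vp.
have [e1 e2 e3 e4 e5] := @walk_end east (hE B) (fun q => q.1) (fun q => q.2) (bV B)
  (fun q => erefl) (fun q => erefl) inj1 (fun q _ h => (hH q h).2) p Vp.
cbv beta in e1, e2, e3, e4, e5.
rewrite /ptR; split; [split => // |].
- by move=> x h1 h2; apply: e3.
- by move=> x h1 h2; apply: e4.
- by rewrite [X in X \in _]pix_eta e1; apply: e4 => //; rewrite e1.
Qed.

Lemma ptL_spec (B : board) (p : pixel) : is_board B -> p \in bV B ->
  [/\ (ptL B p).2 = p.2, (ptL B p).1 <= p.1,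
   (forall x : int, (ptL B p).1 <= x -> x < p.1 -> hE B (x, p.2)),
   (forall x : int, (ptL B p).1 <= x -> x <= p.1 -> (x, p.2) \in bV B)
   & ~~ hE B (west (ptL B p))] /\ ptL B p \in bV B.
Proof.
move=> [hH hV] Vp.
have hf : forall q, - (west q).1 = - q.1 + 1 by move=> q /=; lia.
have [e1 e2 e3 e4 e5] := @walk_end west (fun q => hE B (west q)) (fun q => - q.1) (fun q => q.2) (bV B)
  hf (fun q => erefl) inj3 (fun q _ h => (hH _ h).1) p Vp.
cbv beta in e1, e2, e3, e4, e5.
rewrite /ptL; split; [split => // |].
- lia.
- move=> x h1 h2; have := e3 (x + 1, p.2) erefl; rewrite westS; apply => /=; lia.
- by move=> x h1 h2; apply: e4 => //=; lia.
- by rewrite [X in X \in _]pix_eta e1; apply: e4 => //; rewrite e1.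
Qed.

Lemma ptU_spec (B : board) (p : pixel) : is_board B -> p \in bV B ->
  [/\ (ptU B p).1 = p.1, p.2 <= (ptU B p).2,
   (forall y : int, p.2 <= y -> y < (ptU B p).2 -> vE B (p.1, y)),
   (forall y : int, p.2 <= y -> y <= (ptU B p).2 -> (p.1, y) \in bV B)
   & ~~ vE B (ptU B p)] /\ ptU B p \in bV B.
Proof.
move=> [hH hV] Vp.
have [e1 e2 e3 e4 e5] := @walk_end north (vE B) (fun q => q.2) (fun q => q.1) (bV B)
  (fun q => erefl) (fun q => erefl) inj2 (fun q _ h => (hV q h).2) p Vp.
cbv beta in e1, e2, e3, e4, e5.
rewrite /ptU; split; [split => // |].
- by move=> x h1 h2; apply: e3.
- by move=> x h1 h2; apply: e4.
- by rewrite [X in X \in _]pix_eta e1; apply: e4 => //; rewrite e1.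
Qed.

Lemma ptD_spec (B : board) (p : pixel) : is_board B -> p \in bV B ->
  [/\ (ptD B p).1 = p.1, (ptD B p).2 <= p.2,
   (forall y : int, (ptD B p).2 <= y -> y < p.2 -> vE B (p.1, y)),
   (forall y : int, (ptD B p).2 <= y -> y <= p.2 -> (p.1, y) \in bV B)
   & ~~ vE B (south (ptD B p))] /\ ptD B p \in bV B.
Proof.
move=> [hH hV] Vp.
have hf : forall q, - (south q).2 = - q.2 + 1 by move=> q /=; lia.
have [e1 e2 e3 e4 e5] := @walk_end south (fun q => vE B (south q)) (fun q => - q.2) (fun q => q.1) (bV B)
  hf (fun q => erefl) inj4 (fun q _ h => (hV _ h).1) p Vp.
cbv beta in e1, e2, e3, e4, e5.
rewrite /ptD; split; [split => // |].
- lia.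
- move=> x h1 h2; have := e3 (p.1, x + 1) erefl; rewrite southS; apply => /=; lia.
- by move=> x h1 h2; apply: e4 => //=; lia.
- by rewrite [X in X \in _]pix_eta e1; apply: e4 => //; rewrite e1.
Qed.

Lemma ptR_uniq (B : board) (p r : pixel) : is_board B -> p \in bV B ->
  r.2 = p.2 -> p.1 <= r.1 -> (forall x : int, p.1 <= x -> x < r.1 -> hE B (x, p.2)) ->
  ~~ hE B r -> ptR B p = r.
Proof.
move=> hB Vp r2 r1 r3 r5; have [[e1 e2 e3 e4 e5] _] := ptR_spec hB Vp.
set R := ptR B p in e1 e2 e3 e4 e5 *.
have eR : R = (R.1, p.2) by rewrite -e1 -pix_eta.
have er : r = (r.1, p.2) by rewrite -r2 -pix_eta.
have h1 : ~ (R.1 < r.1) by move=> h; move: e5; rewrite eR r3 //; lia.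
have h2 : ~ (r.1 < R.1) by move=> h; move: r5; rewrite er e3 //; lia.
apply: pixE; [lia | by rewrite e1 r2].
Qed.

Lemma ptL_uniq (B : board) (p l : pixel) : is_board B -> p \in bV B ->
  l.2 = p.2 -> l.1 <= p.1 -> (forall x : int, l.1 <= x -> x < p.1 -> hE B (x, p.2)) ->
  ~~ hE B (west l) -> ptL B p = l.
Proof.
move=> hB Vp r2 r1 r3 r5; have [[e1 e2 e3 e4 e5] _] := ptL_spec hB Vp.
set R := ptL B p in e1 e2 e3 e4 e5 *.
have eR : west R = (R.1 - 1, p.2) by rewrite /west e1.
have er : west l = (l.1 - 1, p.2) by rewrite /west r2.
have h1 : ~ (R.1 < l.1) by move=> h; move: r5; rewrite er e3 //; lia.
have h2 : ~ (l.1 < R.1) by move=> h; move: e5; rewrite eR r3 //; lia.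
apply: pixE; [lia | by rewrite e1 r2].
Qed.

Lemma ptU_uniq (B : board) (p r : pixel) : is_board B -> p \in bV B ->
  r.1 = p.1 -> p.2 <= r.2 -> (forall y : int, p.2 <= y -> y < r.2 -> vE B (p.1, y)) ->
  ~~ vE B r -> ptU B p = r.
Proof.
move=> hB Vp r2 r1 r3 r5; have [[e1 e2 e3 e4 e5] _] := ptU_spec hB Vp.
set R := ptU B p in e1 e2 e3 e4 e5 *.
have eR : R = (p.1, R.2) by rewrite -e1 -pix_eta.
have er : r = (p.1, r.2) by rewrite -r2 -pix_eta.
have h1 : ~ (R.2 < r.2) by move=> h; move: e5; rewrite eR r3 //; lia.
have h2 : ~ (r.2 < R.2) by move=> h; move: r5; rewrite er e3 //; lia.
apply: pixE; [by rewrite e1 r2 | lia].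
Qed.

Lemma ptD_uniq (B : board) (p l : pixel) : is_board B -> p \in bV B ->
  l.1 = p.1 -> l.2 <= p.2 -> (forall y : int, l.2 <= y -> y < p.2 -> vE B (p.1, y)) ->
  ~~ vE B (south l) -> ptD B p = l.
Proof.
move=> hB Vp r2 r1 r3 r5; have [[e1 e2 e3 e4 e5] _] := ptD_spec hB Vp.
set R := ptD B p in e1 e2 e3 e4 e5 *.
have eR : south R = (p.1, R.2 - 1) by rewrite /south e1.
have er : south l = (p.1, l.2 - 1) by rewrite /south r2.
have h1 : ~ (R.2 < l.2) by move=> h; move: r5; rewrite er e3 //; lia.
have h2 : ~ (l.2 < R.2) by move=> h; move: e5; rewrite eR r3 //; lia.
apply: pixE; [by rewrite e1 r2 | lia].
Qed.

Lemma rs_V (B : board) (p q : pixel) : is_board B -> p \in bV B -> in_row_seg B p q -> q \in bV B.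
Proof.
move=> hB Vp [q2 [h1 h2]]; have [[e1 e2 e3 e4 e5] _] := ptR_spec hB Vp.
have [[f1 f2 f3 f4 f5] _] := ptL_spec hB Vp.
rewrite (pix_eta q) q2; case: (lerP p.1 q.1) => h; [apply: e4 | apply: f4] => //; lia.
Qed.

Lemma rs_ptR (B : board) (p q : pixel) : is_board B -> p \in bV B -> in_row_seg B p q ->
  ptR B q = ptR B p.
Proof.
move=> hB Vp hq; have Vq := rs_V hB Vp hq; move: hq => [q2 [h1 h2]].
have [[e1 e2 e3 e4 e5] _] := ptR_spec hB Vp; have [[f1 f2 f3 f4 f5] _] := ptL_spec hB Vp.
apply: ptR_uniq => //; first by rewrite e1 q2.
move=> x hx1 hx2; rewrite q2; case: (lerP p.1 x) => h; [apply: e3 | apply: f3] => //; lia.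
Qed.

Lemma rs_ptL (B : board) (p q : pixel) : is_board B -> p \in bV B -> in_row_seg B p q ->
  ptL B q = ptL B p.
Proof.
move=> hB Vp hq; have Vq := rs_V hB Vp hq; move: hq => [q2 [h1 h2]].
have [[e1 e2 e3 e4 e5] _] := ptR_spec hB Vp; have [[f1 f2 f3 f4 f5] _] := ptL_spec hB Vp.
apply: ptL_uniq => //; first by rewrite f1 q2.
move=> x hx1 hx2; rewrite q2; case: (lerP p.1 x) => h; [apply: e3 | apply: f3] => //; lia.
Qed.

Lemma rs_refl (B : board) (p : pixel) : is_board B -> p \in bV B -> in_row_seg B p p.
Proof.
move=> hB Vp; have [[e1 e2 e3 e4 e5] _] := ptR_spec hB Vp.
have [[f1 f2 f3 f4 f5] _] := ptL_spec hB Vp. by split.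
Qed.

Lemma rs_sym (B : board) (p q : pixel) : is_board B -> p \in bV B -> in_row_seg B p q ->
  in_row_seg B q p.
Proof.
move=> hB Vp hq; rewrite /in_row_seg (rs_ptR hB Vp hq) (rs_ptL hB Vp hq).
have [_ [h1 h2]] := rs_refl hB Vp; by case: hq => -> _.
Qed.

Lemma rs_trans (B : board) (p q r : pixel) : is_board B -> p \in bV B -> in_row_seg B p q ->
  in_row_seg B q r -> in_row_seg B p r.
Proof.
move=> hB Vp hq; rewrite /in_row_seg (rs_ptR hB Vp hq) (rs_ptL hB Vp hq).
by case: hq => -> _.
Qed.

Lemma rs_chainR (B : board) (p q : pixel) : is_board B -> p \in bV B -> q.2 = p.2 -> p.1 <= q.1 ->
  (forall x : int, p.1 <= x -> x < q.1 -> hE B (x, p.2)) -> in_row_seg B p q.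
Proof.
move=> hB Vp q2 h1 h3; have [[e1 e2 e3 e4 e5] _] := ptR_spec hB Vp.
have [[f1 f2 f3 f4 f5] _] := ptL_spec hB Vp.
have eR : ptR B p = ((ptR B p).1, p.2) by rewrite -e1 -pix_eta.
split => //; split; first lia.
case: (lerP q.1 (ptR B p).1) => // h; move: e5; rewrite eR h3 //; lia.
Qed.

Lemma rs_chainL (B : board) (p q : pixel) : is_board B -> p \in bV B -> q.2 = p.2 -> q.1 <= p.1 ->
  (forall x : int, q.1 <= x -> x < p.1 -> hE B (x, p.2)) -> in_row_seg B p q.
Proof.
move=> hB Vp q2 h1 h3; have [[e1 e2 e3 e4 e5] _] := ptR_spec hB Vp.
have [[f1 f2 f3 f4 f5] _] := ptL_spec hB Vp.
have eR : west (ptL B p) = ((ptL B p).1 - 1, p.2) by rewrite /west f1.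
split => //; split; last lia.
case: (lerP (ptL B p).1 q.1) => // h; move: f5; rewrite eR h3 //; lia.
Qed.

Lemma rs_hE (B : board) (p q : pixel) : is_board B -> p \in bV B -> in_row_seg B p q ->
  q.1 < (ptR B p).1 -> hE B q.
Proof.
move=> hB Vp hq h; rewrite -(rs_ptR hB Vp hq) in h.
have Vq := rs_V hB Vp hq; have [[e1 e2 e3 e4 e5] _] := ptR_spec hB Vq.
rewrite (pix_eta q); apply: e3 => //.
Qed.

Lemma rs_hEw (B : board) (p q : pixel) : is_board B -> p \in bV B -> in_row_seg B p q ->
  (ptL B p).1 < q.1 -> hE B (west q).
Proof.
move=> hB Vp hq h; rewrite -(rs_ptL hB Vp hq) in h.
have Vq := rs_V hB Vp hq; have [[e1 e2 e3 e4 e5] _] := ptL_spec hB Vq.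
rewrite /west; apply: e3; lia.
Qed.

Lemma rs_ptR_in (B : board) (p : pixel) : is_board B -> p \in bV B -> in_row_seg B p (ptR B p).
Proof.
move=> hB Vp; have [[e1 e2 e3 e4 e5] _] := ptR_spec hB Vp.
have [[f1 f2 f3 f4 f5] _] := ptL_spec hB Vp; split => //; lia.
Qed.

Lemma rs_ptL_in (B : board) (p : pixel) : is_board B -> p \in bV B -> in_row_seg B p (ptL B p).
Proof.
move=> hB Vp; have [[e1 e2 e3 e4 e5] _] := ptR_spec hB Vp.
have [[f1 f2 f3 f4 f5] _] := ptL_spec hB Vp; split => //; lia.
Qed.

Lemma cs_V (B : board) (p q : pixel) : is_board B -> p \in bV B -> in_col_seg B p q -> q \in bV B.
Proof.
move=> hB Vp [q2 [h1 h2]]; have [[e1 e2 e3 e4 e5] _] := ptU_spec hB Vp.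
have [[f1 f2 f3 f4 f5] _] := ptD_spec hB Vp.
rewrite (pix_eta q) q2; case: (lerP p.2 q.2) => h; [apply: e4 | apply: f4] => //; lia.
Qed.

Lemma cs_ptU (B : board) (p q : pixel) : is_board B -> p \in bV B -> in_col_seg B p q ->
  ptU B q = ptU B p.
Proof.
move=> hB Vp hq; have Vq := cs_V hB Vp hq; move: hq => [q2 [h1 h2]].
have [[e1 e2 e3 e4 e5] _] := ptU_spec hB Vp; have [[f1 f2 f3 f4 f5] _] := ptD_spec hB Vp.
apply: ptU_uniq => //; first by rewrite e1 q2.
move=> x hx1 hx2; rewrite q2; case: (lerP p.2 x) => h; [apply: e3 | apply: f3] => //; lia.
Qed.

Lemma cs_ptD (B : board) (p q : pixel) : is_board B -> p \in bV B -> in_col_seg B p q ->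
  ptD B q = ptD B p.
Proof.
move=> hB Vp hq; have Vq := cs_V hB Vp hq; move: hq => [q2 [h1 h2]].
have [[e1 e2 e3 e4 e5] _] := ptU_spec hB Vp; have [[f1 f2 f3 f4 f5] _] := ptD_spec hB Vp.
apply: ptD_uniq => //; first by rewrite f1 q2.
move=> x hx1 hx2; rewrite q2; case: (lerP p.2 x) => h; [apply: e3 | apply: f3] => //; lia.
Qed.

Lemma cs_refl (B : board) (p : pixel) : is_board B -> p \in bV B -> in_col_seg B p p.
Proof.
move=> hB Vp; have [[e1 e2 e3 e4 e5] _] := ptU_spec hB Vp.
have [[f1 f2 f3 f4 f5] _] := ptD_spec hB Vp. by split.
Qed.

Lemma cs_sym (B : board) (p q : pixel) : is_board B -> p \in bV B -> in_col_seg B p q ->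
  in_col_seg B q p.
Proof.
move=> hB Vp hq; rewrite /in_col_seg (cs_ptU hB Vp hq) (cs_ptD hB Vp hq).
have [_ [h1 h2]] := cs_refl hB Vp; by case: hq => -> _.
Qed.

Lemma cs_trans (B : board) (p q r : pixel) : is_board B -> p \in bV B -> in_col_seg B p q ->
  in_col_seg B q r -> in_col_seg B p r.
Proof.
move=> hB Vp hq; rewrite /in_col_seg (cs_ptU hB Vp hq) (cs_ptD hB Vp hq).
by case: hq => -> _.
Qed.

Lemma cs_chainU (B : board) (p q : pixel) : is_board B -> p \in bV B -> q.1 = p.1 -> p.2 <= q.2 ->
  (forall x : int, p.2 <= x -> x < q.2 -> vE B (p.1, x)) -> in_col_seg B p q.
Proof.
move=> hB Vp q2 h1 h3; have [[e1 e2 e3 e4 e5] _] := ptU_spec hB Vp.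
have [[f1 f2 f3 f4 f5] _] := ptD_spec hB Vp.
have eR : ptU B p = (p.1, (ptU B p).2) by rewrite -e1 -pix_eta.
split => //; split; first lia.
case: (lerP q.2 (ptU B p).2) => // h; move: e5; rewrite eR h3 //; lia.
Qed.

Lemma cs_chainD (B : board) (p q : pixel) : is_board B -> p \in bV B -> q.1 = p.1 -> q.2 <= p.2 ->
  (forall x : int, q.2 <= x -> x < p.2 -> vE B (p.1, x)) -> in_col_seg B p q.
Proof.
move=> hB Vp q2 h1 h3; have [[e1 e2 e3 e4 e5] _] := ptU_spec hB Vp.
have [[f1 f2 f3 f4 f5] _] := ptD_spec hB Vp.
have eR : south (ptD B p) = (p.1, (ptD B p).2 - 1) by rewrite /south f1.
split => //; split; last lia.
case: (lerP (ptD B p).2 q.2) => // h; move: f5; rewrite eR h3 //; lia.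
Qed.

Lemma cs_vE (B : board) (p q : pixel) : is_board B -> p \in bV B -> in_col_seg B p q ->
  q.2 < (ptU B p).2 -> vE B q.
Proof.
move=> hB Vp hq h; rewrite -(cs_ptU hB Vp hq) in h.
have Vq := cs_V hB Vp hq; have [[e1 e2 e3 e4 e5] _] := ptU_spec hB Vq.
rewrite (pix_eta q); apply: e3 => //.
Qed.

Lemma cs_vEs (B : board) (p q : pixel) : is_board B -> p \in bV B -> in_col_seg B p q ->
  (ptD B p).2 < q.2 -> vE B (south q).
Proof.
move=> hB Vp hq h; rewrite -(cs_ptD hB Vp hq) in h.
have Vq := cs_V hB Vp hq; have [[e1 e2 e3 e4 e5] _] := ptD_spec hB Vq.
rewrite /south; apply: e3; lia.
Qed.

Lemma cs_ptU_in (B : board) (p : pixel) : is_board B -> p \in bV B -> in_col_seg B p (ptU B p).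
Proof.
move=> hB Vp; have [[e1 e2 e3 e4 e5] _] := ptU_spec hB Vp.
have [[f1 f2 f3 f4 f5] _] := ptD_spec hB Vp; split => //; lia.
Qed.

Lemma cs_ptD_in (B : board) (p : pixel) : is_board B -> p \in bV B -> in_col_seg B p (ptD B p).
Proof.
move=> hB Vp; have [[e1 e2 e3 e4 e5] _] := ptU_spec hB Vp.
have [[f1 f2 f3 f4 f5] _] := ptD_spec hB Vp; split => //; lia.
Qed.

Definition rowL (B : board) (S : seq pixel) (q : pixel) := exists a, L0 B S a /\ in_row_seg B a q.
Definition colL (B : board) (S : seq pixel) (q : pixel) := exists b, L0 B S b /\ in_col_seg B b q.

Lemma tilts_V (B : board) (p : pixel) : is_board B -> p \in bV B ->
  [/\ ptL B p \in bV B, ptR B p \in bV B, ptU B p \in bV B & ptD B p \in bV B].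
Proof.
move=> hB Vp; split; [exact: (ptL_spec hB Vp).2 | exact: (ptR_spec hB Vp).2
  | exact: (ptU_spec hB Vp).2 | exact: (ptD_spec hB Vp).2].
Qed.

Lemma tilt_in_V (B : board) (p q : pixel) : is_board B -> p \in bV B ->
  q \in [:: ptL B p; ptR B p; ptU B p; ptD B p] -> q \in bV B.
Proof.
move=> hB Vp; have [h1 h2 h3 h4] := tilts_V hB Vp.
by rewrite !inE => /or4P [] /eqP ->.
Qed.

Lemma freach_V (B : board) (a q : pixel) : is_board B -> a \in bV B -> freach B a q -> q \in bV B.
Proof.
move=> hB Va [s [hs <-]].
have all_in i : (i < size s)%N -> nth a s i \in bV B.
  elim: i => [|i IH] hi.
    by have [Vx [hq _]] := hs 0%N hi; apply: tilt_in_V hq.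
  have [Vx [hq _]] := hs i.+1 hi; exact: tilt_in_V hq.
case: s hs all_in => [|x s] // hs all_in.
rewrite -nth_last; apply: all_in => /=; exact: ltnSn.
Qed.

Lemma L0_V (B : board) (S : seq pixel) (a : pixel) : is_board B -> {subset S <= bV B} ->
  L0 B S a -> a \in bV B.
Proof.
move=> hB hS [[c [[Vc _] hr]]|[[s [sS ha]]|[c [p [_ [[Vp _] ha]]]]]].
- exact: freach_V hr.
- move: ha; rewrite inE => /orP [/eqP -> |]; first exact: hS.
  exact: tilt_in_V (hS _ sS).
- exact: tilt_in_V ha.
Qed.

Lemma rowL_inv (B : board) (S : seq pixel) (p q : pixel) : is_board B -> {subset S <= bV B} ->
  p \in bV B -> in_row_seg B p q -> rowL B S p -> rowL B S q.
Proof.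
move=> hB hS Vp hq [a [La ha]]; exists a; split => //.
exact: rs_trans hB (L0_V hB hS La) ha hq.
Qed.

Lemma colL_inv (B : board) (S : seq pixel) (p q : pixel) : is_board B -> {subset S <= bV B} ->
  p \in bV B -> in_col_seg B p q -> colL B S p -> colL B S q.
Proof.
move=> hB hS Vp hq [a [La ha]]; exists a; split => //.
exact: cs_trans hB (L0_V hB hS La) ha hq.
Qed.

Lemma Lvert_iff (B : board) (S : seq pixel) (q : pixel) : is_board B -> {subset S <= bV B} ->
  Lvert B S q <-> [/\ q \in bV B, rowL B S q & colL B S q].
Proof.
move=> hB hS; split.
  case=> Vq [Lq|[a [b [La [Lb [ha hb]]]]]].
    by split => //; exists q; split => //; [exact: rs_refl | exact: cs_refl].
  by split => //; [exists a | exists b].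
by case=> Vq [a [La ha]] [b [Lb hb]]; split => //; right; exists a, b.
Qed.

Lemma corner_L0 (B : board) (S : seq pixel) (a : pixel) : corner_pixel B a -> L0 B S a.
Proof.
move=> hc; left; exists a; split => //; exists [::]; split => // i; by rewrite ltn0.
Qed.

Lemma reflex_L0 (B : board) (S : seq pixel) (c p q : pixel) : reflex_corner B c -> incident B c p ->
  q \in [:: ptL B p; ptR B p; ptU B p; ptD B p] -> L0 B S q.
Proof. by move=> h1 h2 h3; right; right; exists c, p. Qed.

Lemma G1_left (B : board) (S : seq pixel) (z : pixel) : is_board B -> {subset S <= bV B} ->
  z \in bV B -> ~~ hE B (west z) -> colL B S z.
Proof.
move=> hB hS Vz hz; have [[e1 e2 e3 e4 e5] Vt] := ptU_spec hB Vz.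
set t := ptU B z in e1 e2 e3 e4 e5 Vt.
suff H : forall k (ay : int), absz (t.2 - ay) = k -> z.2 <= ay -> ay <= t.2 ->
    ~~ hE B (west (z.1, ay)) -> colL B S z.
  by apply: (H _ z.2 erefl) => //; rewrite lexx.
elim=> [|k IH] ay hk h1 h2 ha.
all: have Va : (z.1, ay) \in bV B by apply: e4.
all: have sa : in_col_seg B z (z.1, ay) by split => //=; split => //; have := (ptD_spec hB Vz).1; case=> _ ? *; lia.
  have et : (z.1, ay) = t by apply: pixE => /=; lia.
  have hc : corner_pixel B (z.1, ay).
    split => //; split.
      by left; symmetry; apply: ptL_uniq => //; move=> x /= *; lia.
    by left; symmetry; apply: ptU_uniq => //; [move=> y /= *; lia | rewrite et].
  exists (z.1, ay); split; first exact: corner_L0.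
  exact: cs_sym hB Vz sa.
have lt : ay < t.2 by lia.
have hv : vE B (z.1, ay) by apply: e3.
case hw : (hE B (west (z.1, ay + 1))).
  have rc : reflex_corner B (z.1, ay + 1).
    rewrite /reflex_corner /bside /j1 /j2 /j3 /j4 /qNE /qNW /qSW /qSE /= addrK.
    split; first by right; right; left; split; [right | ].
    by right; right; right; apply/andP; split.
  have inc : incident B (z.1, ay + 1) (z.1, ay).
    by split => //; rewrite /qNE /qNW /qSW /qSE /= addrK !inE eqxx !orbT.
  exists (ptU B (z.1, ay)); split.
    refine (@reflex_L0 B S _ _ _ rc inc _).
    by rewrite !inE eqxx !orbT.
  rewrite (cs_ptU hB Vz sa); exact: cs_sym hB Vz (cs_ptU_in hB Vz).
apply: (IH (ay + 1)) => //; [lia | lia | lia | by rewrite hw].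
Qed.

Lemma G1_right (B : board) (S : seq pixel) (z : pixel) : is_board B -> {subset S <= bV B} ->
  z \in bV B -> ~~ hE B z -> colL B S z.
Proof.
move=> hB hS Vz hz; have [[e1 e2 e3 e4 e5] Vt] := ptU_spec hB Vz.
set t := ptU B z in e1 e2 e3 e4 e5 Vt.
suff H : forall k (ay : int), absz (t.2 - ay) = k -> z.2 <= ay -> ay <= t.2 ->
    ~~ hE B (z.1, ay) -> colL B S z.
  apply: (H _ z.2 erefl) => //; try (by rewrite lexx); by rewrite -pix_eta.
elim=> [|k IH] ay hk h1 h2 ha.
all: have Va : (z.1, ay) \in bV B by apply: e4.
all: have sa : in_col_seg B z (z.1, ay) by split => //=; split => //; have := (ptD_spec hB Vz).1; case=> _ ? *; lia.
  have et : (z.1, ay) = t by apply: pixE => /=; lia.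
  have hc : corner_pixel B (z.1, ay).
    split => //; split.
      by right; symmetry; apply: ptR_uniq => //; move=> x /= *; lia.
    by left; symmetry; apply: ptU_uniq => //; [move=> y /= *; lia | rewrite et].
  exists (z.1, ay); split; first exact: corner_L0.
  exact: cs_sym hB Vz sa.
have lt : ay < t.2 by lia.
have hv : vE B (z.1, ay) by apply: e3.
case hw : (hE B (z.1, ay + 1)).
  have rc : reflex_corner B (z.1 + 1, ay + 1).
    rewrite /reflex_corner /bside /j1 /j2 /j3 /j4 /qNE /qNW /qSW /qSE /= !addrK.
    split; first by right; right; left; split; [left | ].
    by left; apply/andP; split.
  have inc : incident B (z.1 + 1, ay + 1) (z.1, ay).
    by split => //; rewrite /qNE /qNW /qSW /qSE /= !addrK !inE eqxx !orbT.
  exists (ptU B (z.1, ay)); split.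
    refine (@reflex_L0 B S _ _ _ rc inc _).
    by rewrite !inE eqxx !orbT.
  rewrite (cs_ptU hB Vz sa); exact: cs_sym hB Vz (cs_ptU_in hB Vz).
apply: (IH (ay + 1)) => //; [lia | lia | lia | by rewrite hw].
Qed.

Lemma G1_top (B : board) (S : seq pixel) (z : pixel) : is_board B -> {subset S <= bV B} ->
  z \in bV B -> ~~ vE B z -> rowL B S z.
Proof.
move=> hB hS Vz hz; have [[e1 e2 e3 e4 e5] Vt] := ptR_spec hB Vz.
set t := ptR B z in e1 e2 e3 e4 e5 Vt.
suff H : forall k (ax : int), absz (t.1 - ax) = k -> z.1 <= ax -> ax <= t.1 ->
    ~~ vE B (ax, z.2) -> rowL B S z.
  apply: (H _ z.1 erefl) => //; try (by rewrite lexx); by rewrite -pix_eta.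
elim=> [|k IH] ax hk h1 h2 ha.
all: have Va : (ax, z.2) \in bV B by apply: e4.
all: have sa : in_row_seg B z (ax, z.2) by split => //=; split => //; have := (ptL_spec hB Vz).1; case=> _ ? *; lia.
  have et : (ax, z.2) = t by apply: pixE => /=; lia.
  have hc : corner_pixel B (ax, z.2).
    split => //; split.
      by right; symmetry; apply: ptR_uniq => //; [move=> x /= *; lia | rewrite et].
    by left; symmetry; apply: ptU_uniq => //; move=> y /= *; lia.
  exists (ax, z.2); split; first exact: corner_L0.
  exact: rs_sym hB Vz sa.
have lt : ax < t.1 by lia.
have hv : hE B (ax, z.2) by apply: e3.
case hw : (vE B (ax + 1, z.2)).
  have rc : reflex_corner B (ax + 1, z.2 + 1).
    rewrite /reflex_corner /bside /j1 /j2 /j3 /j4 /qNE /qNW /qSW /qSE /= !addrK.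
    split; first by right; left; split; [left | ].
    by right; right; left; apply/andP; split.
  have inc : incident B (ax + 1, z.2 + 1) (ax, z.2).
    by split => //; rewrite /qNE /qNW /qSW /qSE /= !addrK !inE eqxx !orbT.
  exists (ptR B (ax, z.2)); split.
    refine (@reflex_L0 B S _ _ _ rc inc _).
    by rewrite !inE eqxx !orbT.
  rewrite (rs_ptR hB Vz sa); exact: rs_sym hB Vz (rs_ptR_in hB Vz).
apply: (IH (ax + 1)) => //; [lia | lia | lia | by rewrite hw].
Qed.

Lemma G1_bottom (B : board) (S : seq pixel) (z : pixel) : is_board B -> {subset S <= bV B} ->
  z \in bV B -> ~~ vE B (south z) -> rowL B S z.
Proof.
move=> hB hS Vz hz; have [[e1 e2 e3 e4 e5] Vt] := ptR_spec hB Vz.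
set t := ptR B z in e1 e2 e3 e4 e5 Vt.
suff H : forall k (ax : int), absz (t.1 - ax) = k -> z.1 <= ax -> ax <= t.1 ->
    ~~ vE B (ax, z.2 - 1) -> rowL B S z.
  by apply: (H _ z.1 erefl) => //; rewrite lexx.
elim=> [|k IH] ax hk h1 h2 ha.
all: have Va : (ax, z.2) \in bV B by apply: e4.
all: have sa : in_row_seg B z (ax, z.2) by split => //=; split => //; have := (ptL_spec hB Vz).1; case=> _ ? *; lia.
  have et : (ax, z.2) = t by apply: pixE => /=; lia.
  have hc : corner_pixel B (ax, z.2).
    split => //; split.
      by right; symmetry; apply: ptR_uniq => //; [move=> x /= *; lia | rewrite et].
    by right; symmetry; apply: ptD_uniq => //; move=> y /= *; lia.
  exists (ax, z.2); split; first exact: corner_L0.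
  exact: rs_sym hB Vz sa.
have lt : ax < t.1 by lia.
have hv : hE B (ax, z.2) by apply: e3.
case hw : (vE B (ax + 1, z.2 - 1)).
  have rc : reflex_corner B (ax + 1, z.2).
    rewrite /reflex_corner /bside /j1 /j2 /j3 /j4 /qNE /qNW /qSW /qSE /= !addrK.
    split; first by right; left; split; [right | ].
    by right; right; right; apply/andP; split.
  have inc : incident B (ax + 1, z.2) (ax, z.2).
    by split => //; rewrite /qNE /qNW /qSW /qSE /= !addrK !inE eqxx !orbT.
  exists (ptR B (ax, z.2)); split.
    refine (@reflex_L0 B S _ _ _ rc inc _).
    by rewrite !inE eqxx !orbT.
  rewrite (rs_ptR hB Vz sa); exact: rs_sym hB Vz (rs_ptR_in hB Vz).
apply: (IH (ax + 1)) => //; [lia | lia | lia | by rewrite hw].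
Qed.

Lemma colL_seg (B : board) (S : seq pixel) (p q : pixel) : is_board B -> {subset S <= bV B} ->
  p \in bV B -> in_col_seg B p q -> (colL B S q <-> colL B S p).
Proof.
move=> hB hS Vp hq; have Vq := cs_V hB Vp hq; split; last exact: colL_inv.
by apply: colL_inv => //; exact: cs_sym.
Qed.

Lemma rowL_seg (B : board) (S : seq pixel) (p q : pixel) : is_board B -> {subset S <= bV B} ->
  p \in bV B -> in_row_seg B p q -> (rowL B S q <-> rowL B S p).
Proof.
move=> hB hS Vp hq; have Vq := rs_V hB Vp hq; split; last exact: rowL_inv.
by apply: rowL_inv => //; exact: rs_sym.
Qed.

Lemma nocolL_hEw (B : board) (S : seq pixel) (z : pixel) : is_board B -> {subset S <= bV B} ->
  z \in bV B -> ~ colL B S z -> hE B (west z).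
Proof. by move=> hB hS Vz h; apply/negPn/negP => /(G1_left hB hS Vz). Qed.
Lemma nocolL_hE (B : board) (S : seq pixel) (z : pixel) : is_board B -> {subset S <= bV B} ->
  z \in bV B -> ~ colL B S z -> hE B z.
Proof. by move=> hB hS Vz h; apply/negPn/negP => /(G1_right hB hS Vz). Qed.
Lemma norowL_vE (B : board) (S : seq pixel) (z : pixel) : is_board B -> {subset S <= bV B} ->
  z \in bV B -> ~ rowL B S z -> vE B z.
Proof. by move=> hB hS Vz h; apply/negPn/negP => /(G1_top hB hS Vz). Qed.
Lemma norowL_vEs (B : board) (S : seq pixel) (z : pixel) : is_board B -> {subset S <= bV B} ->
  z \in bV B -> ~ rowL B S z -> vE B (south z).
Proof. by move=> hB hS Vz h; apply/negPn/negP => /(G1_bottom hB hS Vz). Qed.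

Lemma reflex_colL (B : board) (S : seq pixel) (c p : pixel) : is_board B -> reflex_corner B c ->
  incident B c p -> colL B S p.
Proof.
move=> hB rc inc; have Vp := inc.1; exists (ptU B p); split.
  refine (@reflex_L0 B S _ _ _ rc inc _); by rewrite !inE eqxx !orbT.
exact: cs_sym hB Vp (cs_ptU_in hB Vp).
Qed.

Lemma reflex_rowL (B : board) (S : seq pixel) (c p : pixel) : is_board B -> reflex_corner B c ->
  incident B c p -> rowL B S p.
Proof.
move=> hB rc inc; have Vp := inc.1; exists (ptR B p); split.
  refine (@reflex_L0 B S _ _ _ rc inc _); by rewrite !inE eqxx !orbT.
exact: rs_sym hB Vp (rs_ptR_in hB Vp).
Qed.

Lemma G3c (B : board) (S : seq pixel) (b : pixel) : is_board B -> {subset S <= bV B} ->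
  b \in bV B -> vE B b -> ~ colL B S b -> vE B (west b).
Proof.
move=> hB hS Vb hv hc; have [hH hV] := hB.
have sn : in_col_seg B b (north b).
  apply: cs_chainU => //=; first lia. move=> y h1 h2; have -> : y = b.2 by lia. by rewrite -pix_eta.
have Vn := cs_V hB Vb sn.
have hn : ~ colL B S (north b) by move/(colL_seg hB hS Vb sn).
have h1 := nocolL_hEw hB hS Vb hc; have h2 := nocolL_hEw hB hS Vn hn.
apply/negPn/negP => h3; apply: hc; move: Vb hv h1 h2 h3; clear sn Vn hn; case: b => x y Vb hv h1 h2 h3.
have VSW : (x - 1, y) \in bV B by have := (hH _ h1).1.
apply: (@reflex_colL B S (x, y + 1)) => //.
  rewrite /reflex_corner /bside /j1 /j2 /j3 /j4 /qNE /qNW /qSW /qSE /= !addrK.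
  split; first by right; left; split; [left | ].
  by right; right; left; apply/andP; split.
by split => //; rewrite /qNE /qNW /qSW /qSE /= !addrK !inE eqxx !orbT.
Qed.

Lemma G4top (B : board) (S : seq pixel) (t : pixel) : is_board B -> {subset S <= bV B} ->
  t \in bV B -> ~~ vE B t -> ~ colL B S t -> ~~ vE B (west t).
Proof.
move=> hB hS Vt hv hc; have [hH hV] := hB.
have h1 := nocolL_hEw hB hS Vt hc.
apply/negP => h3; apply: hc; move: Vt hv h1 h3; case: t => x y Vt hv h1 h3.
apply: (@reflex_colL B S (x, y + 1)) => //.
  rewrite /reflex_corner /bside /j1 /j2 /j3 /j4 /qNE /qNW /qSW /qSE /= !addrK.
  split; first by right; right; right; split; [left | ].
  by right; left; apply/andP; split.
by split => //; rewrite /qNE /qNW /qSW /qSE /= !addrK !inE eqxx !orbT.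
Qed.

Lemma G4bot (B : board) (S : seq pixel) (d : pixel) : is_board B -> {subset S <= bV B} ->
  d \in bV B -> ~~ vE B (south d) -> ~ colL B S d -> ~~ vE B (south (west d)).
Proof.
move=> hB hS Vd hv hc; have [hH hV] := hB.
have h1 := nocolL_hEw hB hS Vd hc.
apply/negP => h3; apply: hc; move: Vd hv h1 h3; case: d => x y Vd hv h1 h3.
apply: (@reflex_colL B S (x, y)) => //.
  rewrite /reflex_corner /bside /j1 /j2 /j3 /j4 /qNE /qNW /qSW /qSE /=.
  split; first by right; right; right; split; [right | ].
  by left; apply/andP; split.
by split => //; rewrite /qNE /qNW /qSW /qSE /= !inE eqxx.
Qed.

Lemma G3r (B : board) (S : seq pixel) (b : pixel) : is_board B -> {subset S <= bV B} ->
  b \in bV B -> hE B b -> ~ rowL B S b -> hE B (south b).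
Proof.
move=> hB hS Vb hv hc; have [hH hV] := hB.
have sn : in_row_seg B b (east b).
  apply: rs_chainR => //=; first lia. move=> x h1 h2; have -> : x = b.1 by lia. by rewrite -pix_eta.
have Vn := rs_V hB Vb sn.
have hn : ~ rowL B S (east b) by move/(rowL_seg hB hS Vb sn).
have h1 := norowL_vEs hB hS Vb hc; have h2 := norowL_vEs hB hS Vn hn.
apply/negPn/negP => h3; apply: hc; move: Vb hv h1 h2 h3; clear sn Vn hn; case: b => x y Vb hv h1 h2 h3.
have VSW : (x, y - 1) \in bV B by have := (hV _ h1).1.
apply: (@reflex_rowL B S (x + 1, y)) => //.
  rewrite /reflex_corner /bside /j1 /j2 /j3 /j4 /qNE /qNW /qSW /qSE /= !addrK.
  split; first by right; right; left; split; [left | ].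
  by left; apply/andP; split.
by split => //; rewrite /qNE /qNW /qSW /qSE /= !addrK !inE eqxx !orbT.
Qed.

Lemma G4right (B : board) (S : seq pixel) (r : pixel) : is_board B -> {subset S <= bV B} ->
  r \in bV B -> ~~ hE B r -> ~ rowL B S r -> ~~ hE B (south r).
Proof.
move=> hB hS Vr hv hc; have [hH hV] := hB.
have h1 := norowL_vEs hB hS Vr hc.
apply/negP => h3; apply: hc; move: Vr hv h1 h3; case: r => x y Vr hv h1 h3.
apply: (@reflex_rowL B S (x + 1, y)) => //.
  rewrite /reflex_corner /bside /j1 /j2 /j3 /j4 /qNE /qNW /qSW /qSE /= !addrK.
  split; first by left; split; [left | ].
  by right; left; apply/andP; split.
by split => //; rewrite /qNE /qNW /qSW /qSE /= !addrK !inE eqxx !orbT.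
Qed.

Lemma G4left (B : board) (S : seq pixel) (l : pixel) : is_board B -> {subset S <= bV B} ->
  l \in bV B -> ~~ hE B (west l) -> ~ rowL B S l -> ~~ hE B (west (south l)).
Proof.
move=> hB hS Vl hv hc; have [hH hV] := hB.
have h1 := norowL_vEs hB hS Vl hc.
apply/negP => h3; apply: hc; move: Vl hv h1 h3; case: l => x y Vl hv h1 h3.
apply: (@reflex_rowL B S (x, y)) => //.
  rewrite /reflex_corner /bside /j1 /j2 /j3 /j4 /qNE /qNW /qSW /qSE /=.
  split; first by left; split; [right | ].
  by right; right; left; apply/andP; split.
by split => //; rewrite /qNE /qNW /qSW /qSE /= !inE eqxx.
Qed.

Lemma nocol_seg (B : board) (S : seq pixel) (a : pixel) (y : int) : is_board B -> {subset S <= bV B} ->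
  a \in bV B -> ~ colL B S a -> (ptD B a).2 <= y -> y <= (ptU B a).2 ->
  (a.1, y) \in bV B /\ ~ colL B S (a.1, y).
Proof.
move=> hB hS Va hc h1 h2; have sa : in_col_seg B a (a.1, y) by [].
split; first exact: cs_V sa.
by move/(colL_seg hB hS Va sa).
Qed.

Lemma norow_seg (B : board) (S : seq pixel) (a : pixel) (x : int) : is_board B -> {subset S <= bV B} ->
  a \in bV B -> ~ rowL B S a -> (ptL B a).1 <= x -> x <= (ptR B a).1 ->
  (x, a.2) \in bV B /\ ~ rowL B S (x, a.2).
Proof.
move=> hB hS Va hc h1 h2; have sa : in_row_seg B a (x, a.2) by [].
split; first exact: rs_V sa.
by move/(rowL_seg hB hS Va sa).
Qed.

Lemma BC1 (B : board) (S : seq pixel) (a : pixel) : is_board B -> {subset S <= bV B} ->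
  a \in bV B -> ~ colL B S a ->
  [/\ hE B (west a), west a \in bV B, ptU B (west a) = west (ptU B a)
    & ptD B (west a) = west (ptD B a)].
Proof.
move=> hB hS Va hc; have [hH hV] := hB.
have h1 := nocolL_hEw hB hS Va hc; have Vw := (hH _ h1).1.
have [[u1 u2 u3 u4 u5] Vu] := ptU_spec hB Va; have [[d1 d2 d3 d4 d5] Vd] := ptD_spec hB Va.
split => //.
- apply: ptU_uniq => //=; first by rewrite u1.
  + move=> y hy1 hy2; have [Vy ny] := nocol_seg hB hS Va hc (ltac:(lia) : (ptD B a).2 <= y) (ltac:(lia)).
    rewrite -[(a.1 - 1, y)]/(west (a.1, y)); apply: (G3c hB hS Vy) => //; exact: u3.
  + have := G4top hB hS Vu u5; rewrite /west u1; apply.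
    by move/(colL_seg hB hS Va (cs_ptU_in hB Va)).
- apply: ptD_uniq => //=; first by rewrite d1.
  + move=> y hy1 hy2; have [Vy ny] := nocol_seg hB hS Va hc (ltac:(lia) : (ptD B a).2 <= y) (ltac:(lia)).
    rewrite -[(a.1 - 1, y)]/(west (a.1, y)); apply: (G3c hB hS Vy) => //; exact: d3.
  + have := G4bot hB hS Vd d5; rewrite /west /south d1; apply.
    by move/(colL_seg hB hS Va (cs_ptD_in hB Va)).
Qed.

Lemma BR1 (B : board) (S : seq pixel) (a : pixel) : is_board B -> {subset S <= bV B} ->
  a \in bV B -> ~ rowL B S a ->
  [/\ vE B (south a), south a \in bV B, ptL B (south a) = south (ptL B a)
    & ptR B (south a) = south (ptR B a)].
Proof.
move=> hB hS Va hc; have [hH hV] := hB.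
have h1 := norowL_vEs hB hS Va hc; have Vw := (hV _ h1).1.
have [[u1 u2 u3 u4 u5] Vu] := ptR_spec hB Va; have [[d1 d2 d3 d4 d5] Vd] := ptL_spec hB Va.
split => //.
- apply: ptL_uniq => //=; first by rewrite d1.
  + move=> x hy1 hy2; have [Vy ny] := norow_seg hB hS Va hc (ltac:(lia) : (ptL B a).1 <= x) (ltac:(lia)).
    rewrite -[(x, a.2 - 1)]/(south (x, a.2)); apply: (G3r hB hS Vy) => //; exact: d3.
  + have := G4left hB hS Vd d5; rewrite /west /south d1; apply.
    by move/(rowL_seg hB hS Va (rs_ptL_in hB Va)).
- apply: ptR_uniq => //=; first by rewrite u1.
  + move=> x hy1 hy2; have [Vy ny] := norow_seg hB hS Va hc (ltac:(lia) : (ptL B a).1 <= x) (ltac:(lia)).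
    rewrite -[(x, a.2 - 1)]/(south (x, a.2)); apply: (G3r hB hS Vy) => //; exact: u3.
  + have := G4right hB hS Vu u5; rewrite /south u1; apply.
    by move/(rowL_seg hB hS Va (rs_ptR_in hB Va)).
Qed.

Definition wl (B : board) (S : seq pixel) (v : pixel) :=
  walk west (fun q => ~~ pb (colL B S q)) (size (bV B)) v.
Definition ws (B : board) (S : seq pixel) (v : pixel) :=
  walk south (fun q => ~~ pb (rowL B S q)) (size (bV B)) v.

Lemma wl_spec (B : board) (S : seq pixel) (v : pixel) : is_board B -> {subset S <= bV B} ->
  v \in bV B ->
  [/\ (wl B S v).2 = v.2, (wl B S v).1 <= v.1,
    (forall x : int, (wl B S v).1 < x -> x <= v.1 -> (x, v.2) \in bV B /\ ~ colL B S (x, v.2)),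
    colL B S (wl B S v) & wl B S v \in bV B].
Proof.
move=> hB hS Vv.
have hf : forall q, - (west q).1 = - q.1 + 1 by move=> q /=; lia.
have hV : forall q, q \in bV B -> ~~ pb (colL B S q) -> west q \in bV B.
  by move=> q Vq /pbP hq; have [_ Vw _ _] := BC1 hB hS Vq hq.
have [e1 e2 e3 e4 e5] := @walk_end west (fun q => ~~ pb (colL B S q)) (fun q => - q.1) (fun q => q.2) (bV B)
  hf (fun q => erefl) inj3 hV v Vv.
cbv beta in e1, e2, e3, e4, e5; rewrite /wl; split => //.
- lia.
- move=> x h1 h2; split; first by apply: e4 => //=; lia.
  move=> hc; have /negP := e3 (x, v.2) erefl (ltac:(simpl; lia)) (ltac:(simpl; lia)).
  by apply; apply/pbP.
- by move: e5; rewrite negbK => /pbP.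
- by rewrite [X in X \in _]pix_eta e1; apply: e4 => //; rewrite e1.
Qed.

Lemma ws_spec (B : board) (S : seq pixel) (v : pixel) : is_board B -> {subset S <= bV B} ->
  v \in bV B ->
  [/\ (ws B S v).1 = v.1, (ws B S v).2 <= v.2,
    (forall y : int, (ws B S v).2 < y -> y <= v.2 -> (v.1, y) \in bV B /\ ~ rowL B S (v.1, y)),
    rowL B S (ws B S v) & ws B S v \in bV B].
Proof.
move=> hB hS Vv.
have hf : forall q, - (south q).2 = - q.2 + 1 by move=> q /=; lia.
have hV : forall q, q \in bV B -> ~~ pb (rowL B S q) -> south q \in bV B.
  by move=> q Vq /pbP hq; have [_ Vw _ _] := BR1 hB hS Vq hq.
have [e1 e2 e3 e4 e5] := @walk_end south (fun q => ~~ pb (rowL B S q)) (fun q => - q.2) (fun q => q.1) (bV B)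
  hf (fun q => erefl) inj4 hV v Vv.
cbv beta in e1, e2, e3, e4, e5; rewrite /ws; split => //.
- lia.
- move=> x h1 h2; split; first by apply: e4 => //=; lia.
  move=> hc; have /negP := e3 (v.1, x) erefl (ltac:(simpl; lia)) (ltac:(simpl; lia)).
  by apply; apply/pbP.
- by move: e5; rewrite negbK => /pbP.
- by rewrite [X in X \in _]pix_eta e1; apply: e4 => //; rewrite e1.
Qed.

Lemma wl_uniq (B : board) (S : seq pixel) (v r : pixel) : is_board B -> {subset S <= bV B} ->
  v \in bV B -> r.2 = v.2 -> r.1 <= v.1 ->
  (forall x : int, r.1 < x -> x <= v.1 -> ~ colL B S (x, v.2)) -> colL B S r -> wl B S v = r.
Proof.
move=> hB hS Vv r2 r1 r3 r4; have [e1 e2 e3 e4 e5] := wl_spec hB hS Vv.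
set W := wl B S v in e1 e2 e3 e4 e5 *.
have h1 : ~ (W.1 < r.1) by move=> h; have [_ ] := e3 r.1 h r1; rewrite -r2 -pix_eta.
have h2 : ~ (r.1 < W.1) by move=> h; apply: (r3 W.1 h e2); rewrite -e1 -pix_eta.
apply: pixE; [lia | by rewrite e1 r2].
Qed.

Lemma ws_uniq (B : board) (S : seq pixel) (v r : pixel) : is_board B -> {subset S <= bV B} ->
  v \in bV B -> r.1 = v.1 -> r.2 <= v.2 ->
  (forall y : int, r.2 < y -> y <= v.2 -> ~ rowL B S (v.1, y)) -> rowL B S r -> ws B S v = r.
Proof.
move=> hB hS Vv r2 r1 r3 r4; have [e1 e2 e3 e4 e5] := ws_spec hB hS Vv.
set W := ws B S v in e1 e2 e3 e4 e5 *.
have h1 : ~ (W.2 < r.2) by move=> h; have [_ ] := e3 r.2 h r1; rewrite -r2 -pix_eta.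
have h2 : ~ (r.2 < W.2) by move=> h; apply: (r3 W.2 h e2); rewrite -e1 -pix_eta.
apply: pixE; [by rewrite e1 r2 | lia].
Qed.

Lemma BCext (B : board) (S : seq pixel) (v : pixel) (x : int) : is_board B -> {subset S <= bV B} ->
  v \in bV B -> (wl B S v).1 <= x -> x <= v.1 ->
  [/\ (x, v.2) \in bV B, ptU B (x, v.2) = (x, (ptU B v).2) & ptD B (x, v.2) = (x, (ptD B v).2)].
Proof.
move=> hB hS Vv; have [e1 e2 e3 e4 e5] := wl_spec hB hS Vv.
move: x; suff H : forall k (x : int), absz (v.1 - x) = k -> (wl B S v).1 <= x -> x <= v.1 ->
  [/\ (x, v.2) \in bV B, ptU B (x, v.2) = (x, (ptU B v).2) & ptD B (x, v.2) = (x, (ptD B v).2)].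
  by move=> x; apply: H.
elim=> [|k IH] x hk h1 h2.
  have -> : x = v.1 by lia.
  rewrite -pix_eta; split => //; apply: pixE => //=.
    by have [[? _ _ _ _] _] := ptU_spec hB Vv.
  by have [[? _ _ _ _] _] := ptD_spec hB Vv.
have [Va ca] := e3 (x + 1) (ltac:(lia)) (ltac:(lia)).
have [V' eU eD] := IH (x + 1) (ltac:(lia)) (ltac:(lia)) (ltac:(lia)).
have [_ Vw hU hD] := BC1 hB hS Va ca.
rewrite westS in Vw hU hD; rewrite hU hD eU eD !westS; by split.
Qed.

Lemma BRext (B : board) (S : seq pixel) (v : pixel) (y : int) : is_board B -> {subset S <= bV B} ->
  v \in bV B -> (ws B S v).2 <= y -> y <= v.2 ->
  [/\ (v.1, y) \in bV B, ptL B (v.1, y) = ((ptL B v).1, y) & ptR B (v.1, y) = ((ptR B v).1, y)].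
Proof.
move=> hB hS Vv; have [e1 e2 e3 e4 e5] := ws_spec hB hS Vv.
move: y; suff H : forall k (y : int), absz (v.2 - y) = k -> (ws B S v).2 <= y -> y <= v.2 ->
  [/\ (v.1, y) \in bV B, ptL B (v.1, y) = ((ptL B v).1, y) & ptR B (v.1, y) = ((ptR B v).1, y)].
  by move=> y; apply: H.
elim=> [|k IH] y hk h1 h2.
  have -> : y = v.2 by lia.
  rewrite -pix_eta; split => //; apply: pixE => //=.
    by have [[? _ _ _ _] _] := ptL_spec hB Vv.
  by have [[? _ _ _ _] _] := ptR_spec hB Vv.
have [Va ca] := e3 (y + 1) (ltac:(lia)) (ltac:(lia)).
have [V' eU eD] := IH (y + 1) (ltac:(lia)) (ltac:(lia)) (ltac:(lia)).
have [_ Vw hU hD] := BR1 hB hS Va ca.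
rewrite southS in Vw hU hD; rewrite hU hD eU eD !southS; by split.
Qed.

Lemma wl_row (B : board) (S : seq pixel) (v : pixel) : is_board B -> {subset S <= bV B} ->
  v \in bV B -> in_row_seg B v (wl B S v).
Proof.
move=> hB hS Vv; have [e1 e2 e3 e4 e5] := wl_spec hB hS Vv.
apply: rs_chainL => // x h1 h2; have [Va ca] := e3 (x + 1) (ltac:(lia)) (ltac:(lia)).
by have := nocolL_hEw hB hS Va ca; rewrite westS.
Qed.

Lemma ws_col (B : board) (S : seq pixel) (v : pixel) : is_board B -> {subset S <= bV B} ->
  v \in bV B -> in_col_seg B v (ws B S v).
Proof.
move=> hB hS Vv; have [e1 e2 e3 e4 e5] := ws_spec hB hS Vv.
apply: cs_chainD => // y h1 h2; have [Va ca] := e3 (y + 1) (ltac:(lia)) (ltac:(lia)).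
by have := norowL_vEs hB hS Va ca; rewrite southS.
Qed.

Lemma Xinv (B : board) (S : seq pixel) (v v' : pixel) : is_board B -> {subset S <= bV B} ->
  v \in bV B -> in_col_seg B v v' -> wl B S v' = ((wl B S v).1, v'.2).
Proof.
move=> hB hS Vv hv'; have Vv' := cs_V hB Vv hv'; have [e1 e2 e3 e4 e5] := wl_spec hB hS Vv.
have [v1 [hb ht]] := hv'.
apply: wl_uniq => //=; first lia.
- move=> x h1 h2; have [Vx cx] := e3 x h1 (ltac:(lia)).
  have [_ eU eD] := BCext hB hS Vv (ltac:(lia) : (wl B S v).1 <= x) (ltac:(lia)).
  have sx : in_col_seg B (x, v.2) (x, v'.2) by rewrite /in_col_seg eU eD.
  by move/(colL_seg hB hS Vx sx).
- have [V0 eU eD] := BCext (x := (wl B S v).1) hB hS Vv (ltac:(lia)) e2.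
  have sx : in_col_seg B ((wl B S v).1, v.2) ((wl B S v).1, v'.2) by rewrite /in_col_seg eU eD.
  apply/(colL_seg hB hS V0 sx); by rewrite -e1 -pix_eta.
Qed.

Lemma Yinv (B : board) (S : seq pixel) (v v' : pixel) : is_board B -> {subset S <= bV B} ->
  v \in bV B -> in_row_seg B v v' -> ws B S v' = (v'.1, (ws B S v).2).
Proof.
move=> hB hS Vv hv'; have Vv' := rs_V hB Vv hv'; have [e1 e2 e3 e4 e5] := ws_spec hB hS Vv.
have [v1 [hb ht]] := hv'.
apply: ws_uniq => //=; first lia.
- move=> y h1 h2; have [Vx cx] := e3 y h1 (ltac:(lia)).
  have [_ eU eD] := BRext hB hS Vv (ltac:(lia) : (ws B S v).2 <= y) (ltac:(lia)).
  have sx : in_row_seg B (v.1, y) (v'.1, y) by rewrite /in_row_seg eU eD.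
  by move/(rowL_seg hB hS Vx sx).
- have [V0 eU eD] := BRext (y := (ws B S v).2) hB hS Vv (ltac:(lia)) e2.
  have sx : in_row_seg B (v.1, (ws B S v).2) (v'.1, (ws B S v).2) by rewrite /in_row_seg eU eD.
  apply/(rowL_seg hB hS V0 sx); by rewrite -e1 -pix_eta.
Qed.

Definition piB (B : board) (S : seq pixel) (v : pixel) : pixel := ((wl B S v).1, (ws B S v).2).

Lemma pi_facts (B : board) (S : seq pixel) (v : pixel) : is_board B -> {subset S <= bV B} ->
  v \in bV B -> in_col_seg B (wl B S v) (piB B S v) /\ in_row_seg B (ws B S v) (piB B S v).
Proof.
move=> hB hS Vv; have [e1 e2 e3 e4 e5] := wl_spec hB hS Vv.
have [f1 f2 f3 f4 f5] := ws_spec hB hS Vv.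
have [_ [zc1 zc2]] := ws_col hB hS Vv; have [_ [wr1 wr2]] := wl_row hB hS Vv.
split.
- have [V0 eU eD] := BCext (x := (wl B S v).1) hB hS Vv (ltac:(lia)) e2.
  rewrite [X in in_col_seg B X]pix_eta e1 /in_col_seg eU eD /piB /=; split => //; lia.
- have [V0 eU eD] := BRext (y := (ws B S v).2) hB hS Vv (ltac:(lia)) f2.
  rewrite [X in in_row_seg B X]pix_eta f1 /in_row_seg eU eD /piB /=; split => //; lia.
Qed.

Lemma pi_L (B : board) (S : seq pixel) (v : pixel) : is_board B -> {subset S <= bV B} ->
  v \in bV B -> Lvert B S (piB B S v).
Proof.
move=> hB hS Vv; have [e1 e2 e3 e4 e5] := wl_spec hB hS Vv.
have [f1 f2 f3 f4 f5] := ws_spec hB hS Vv.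
have [hc hr] := pi_facts hB hS Vv.
apply/Lvert_iff => //; split.
- exact: cs_V hc.
- exact: rowL_inv hr f4.
- exact: colL_inv hc e4.
Qed.

Lemma pi_id (B : board) (S : seq pixel) (v : pixel) : is_board B -> {subset S <= bV B} ->
  Lvert B S v -> piB B S v = v.
Proof.
move=> hB hS /(Lvert_iff _ hB hS) [Vv rv cv]; rewrite /piB.
have -> : wl B S v = v by apply: wl_uniq => // x *; lia.
have -> : ws B S v = v by apply: ws_uniq => // x *; lia.
by rewrite -pix_eta.
Qed.

Lemma pi_ptL (B : board) (S : seq pixel) (v : pixel) : is_board B -> {subset S <= bV B} ->
  v \in bV B -> piB B S (ptL B v) = ptL B (piB B S v).
Proof.
move=> hB hS Vv; have [[u1 u2 u3 u4 u5] Vu] := ptL_spec hB Vv.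
have su := rs_ptL_in hB Vv.
have cu := G1_left hB hS Vu u5.
rewrite /piB.
have -> : wl B S (ptL B v) = ptL B v by apply: wl_uniq => // x *; lia.
rewrite (Yinv hB hS Vv su) /=.
have [f1 f2 f3 f4 f5] := ws_spec hB hS Vv.
have [hc hr] := pi_facts hB hS Vv.
rewrite -/(piB B S v) (rs_ptL hB f5 hr).
have [V0 eU eD] := BRext (y := (ws B S v).2) hB hS Vv (ltac:(lia)) f2.
by rewrite [ws B S v]pix_eta f1 eU.
Qed.

Lemma pi_ptR (B : board) (S : seq pixel) (v : pixel) : is_board B -> {subset S <= bV B} ->
  v \in bV B -> piB B S (ptR B v) = ptR B (piB B S v).
Proof.
move=> hB hS Vv; have [[u1 u2 u3 u4 u5] Vu] := ptR_spec hB Vv.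
have su := rs_ptR_in hB Vv.
have cu := G1_right hB hS Vu u5.
rewrite /piB.
have -> : wl B S (ptR B v) = ptR B v by apply: wl_uniq => // x *; lia.
rewrite (Yinv hB hS Vv su) /=.
have [f1 f2 f3 f4 f5] := ws_spec hB hS Vv.
have [hc hr] := pi_facts hB hS Vv.
rewrite -/(piB B S v) (rs_ptR hB f5 hr).
have [V0 eU eD] := BRext (y := (ws B S v).2) hB hS Vv (ltac:(lia)) f2.
by rewrite [ws B S v]pix_eta f1 eD.
Qed.

Lemma pi_ptU (B : board) (S : seq pixel) (v : pixel) : is_board B -> {subset S <= bV B} ->
  v \in bV B -> piB B S (ptU B v) = ptU B (piB B S v).
Proof.
move=> hB hS Vv; have [[u1 u2 u3 u4 u5] Vu] := ptU_spec hB Vv.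
have su := cs_ptU_in hB Vv.
have cu := G1_top hB hS Vu u5.
rewrite /piB.
have -> : ws B S (ptU B v) = ptU B v by apply: ws_uniq => // x *; lia.
rewrite (Xinv hB hS Vv su) /=.
have [f1 f2 f3 f4 f5] := wl_spec hB hS Vv.
have [hc hr] := pi_facts hB hS Vv.
rewrite -/(piB B S v) (cs_ptU hB f5 hc).
have [V0 eU eD] := BCext (x := (wl B S v).1) hB hS Vv (ltac:(lia)) f2.
by rewrite [wl B S v]pix_eta f1 eU.
Qed.

Lemma pi_ptD (B : board) (S : seq pixel) (v : pixel) : is_board B -> {subset S <= bV B} ->
  v \in bV B -> piB B S (ptD B v) = ptD B (piB B S v).
Proof.
move=> hB hS Vv; have [[u1 u2 u3 u4 u5] Vu] := ptD_spec hB Vv.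
have su := cs_ptD_in hB Vv.
have cu := G1_bottom hB hS Vu u5.
rewrite /piB.
have -> : ws B S (ptD B v) = ptD B v by apply: ws_uniq => // x *; lia.
rewrite (Xinv hB hS Vv su) /=.
have [f1 f2 f3 f4 f5] := wl_spec hB hS Vv.
have [hc hr] := pi_facts hB hS Vv.
rewrite -/(piB B S v) (cs_ptD hB f5 hc).
have [V0 eU eD] := BCext (x := (wl B S v).1) hB hS Vv (ltac:(lia)) f2.
by rewrite [wl B S v]pix_eta f1 eD.
Qed.

Lemma pi_hom (B : board) (S : seq pixel) (v u : pixel) : is_board B -> {subset S <= bV B} ->
  fedge B v u -> piB B S v = piB B S u \/ fedge B (piB B S v) (piB B S u).
Proof.
move=> hB hS [Vv [hu _]].
have Vp := (Lvert_iff _ hB hS).1 (pi_L hB hS Vv); case: Vp => Vp _ _.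
have H : piB B S u \in [:: ptL B (piB B S v); ptR B (piB B S v); ptU B (piB B S v); ptD B (piB B S v)].
  move: hu; rewrite !inE => /or4P [] /eqP ->.
  - by rewrite pi_ptL // eqxx.
  - by rewrite pi_ptR // eqxx orbT.
  - by rewrite pi_ptU // eqxx !orbT.
  - by rewrite pi_ptD // eqxx !orbT.
case: (eqVneq (piB B S v) (piB B S u)) => [e|ne]; first by left.
by right; split => //; split => // e; move: ne; rewrite e eqxx.
Qed.

Close Scope ring_scope.

Theorem mainTheorem10 (B : board) (S : seq pixel) (w : nat)
  (par : pixel -> option pixel) :
  is_board B -> {subset S <= bV B} ->
  is_arborescence (GF_vert B) (fedge B) S par ->
  arb_weight (GF_vert B) (fedge B) S par w ->
  exists (par' : pixel -> option pixel) (w' : nat),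
    is_arborescence (Lvert B S) (fedge B) S par' /\
    arb_weight (Lvert B S) (fedge B) S par' w' /\ (w' <= w)%N.
Proof.
move=> hB hS arb aw; apply: (reduction (pi := piB B S)) arb aw.
- by move=> v Vv; apply: pi_L.
- by move=> v Lv; apply: pi_id.
- by move=> v u h; apply: pi_hom.
- by move=> p [].
- move=> s sS; split; first exact: hS.
  by left; right; left; exists s; split => //; rewrite inE eqxx.
Qed.
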